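(* Let $N=1$, assume (H-EL), let $u_0\in\mathcal A$ and let $u$ be the solution of $(P_{u_0})$, with $\operatorname{supp}u=[-\bar r,\bar r]$. Then, as $x\to\bar r^-$, $$u(x)\sim\Big(\tfrac{A(m+1)^2}{2}\Big)^{\frac1{m+1}}(\bar r-x)^{\frac2{m+1}},\qquad u'(x)\sim-\tfrac{2}{m+1}\Big(\tfrac{A(m+1)^2}{2}\Big)^{\frac1{m+1}}(\bar r-x)^{\frac2{m+1}-1}.$$ In particular $u\in H^1_0((-\bar r,\bar r))$.
   Context: Hypothesis (H-EL): $Q\in C^1((0,+\infty))$, $Q\equiv0$ on $(-\infty,0]$, $\inf Q>-\infty$, $Q(u)\sim Au^{1-m}$ as $u\to0^+$ with $A>0$, $1<m<3$, and $|sQ'(s)|\le CQ(s)$ for small $s>0$. $R(s)=Q(s)/s$. $(P_{u_0})$: $-u''+Q'(u)=R(u_0)$ in $\{u>0\}$, $u(0)=u_0$, $u'(0)=0$. $\mathcal A=\{s>0: R'(s)<0,\ R(t)>R(s)\ \forall t\in(0,s)\}$; for $u_0\in\mathcal A$ the solution of $(P_{u_0})$ is even with compact support $[-\bar r,\bar r]$ and strictly decreasing on $(0,\bar r)$. *)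

(* Defs.v *)
From HB Require Import structures.
From mathcomp Require Import all_boot all_order all_algebra.
From mathcomp Require Import all_classical all_reals all_analysis.
Set Implicit Arguments. Unset Strict Implicit. Unset Printing Implicit Defensive.
Import Order.TTheory GRing.Theory Num.Theory.
Import numFieldNormedType.Exports.
Local Open Scope classical_set_scope.
Local Open Scope ring_scope.

Definition Rq {R : realType} (Q : R -> R) (s : R) : R := Q s / s.

Definition H_EL {R : realType} (Q : R -> R) (A m : R) : Prop :=
  [/\ (forall x, 0 < x -> derivable Q x 1 /\ {for x, continuous (derive1 Q)}),
      (forall x, x <= 0 -> Q x = 0) /\ (exists M, forall s, M <= Q s),
      [/\ 0 < A, 1 < m & m < 3],
      (fun s => Q s / (A * powR s (1 - m))) s @[s --> 0^'+] --> (1 : R)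
    & exists C, exists2 d, 0 < d & forall s, 0 < s < d -> `|s * (derive1 Q) s| <= C * Q s].

Definition setA {R : realType} (Q : R -> R) : set R :=
  [set s | 0 < s /\ derive1 (Rq Q) s < 0 /\ (forall t, 0 < t < s -> Rq Q t > Rq Q s)].

Definition is_solution_P {R : realType} (Q : R -> R) (u0 : R) (u : R -> R) (rbar : R) : Prop :=
  [/\ 0 < rbar /\ continuous u,
      (forall x, (0 < u x) <-> (`|x| < rbar)) /\
      (forall x, rbar <= `|x| -> u x = 0),
      (forall x, `|x| < rbar ->
          [/\ derivable u x 1, derivable (derive1 u) x 1 &
              - derive1 (derive1 u) x + (derive1 Q) (u x) = Rq Q u0]),
      (u 0 = u0 /\ (derive1 u) 0 = 0) /\ (forall x, u (- x) = u x)
    & (forall x y, 0 < x -> x < y -> y < rbar -> u y < u x)].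

(* Main.v *)
Require Import Defs.
From HB Require Import structures.
From mathcomp Require Import all_boot all_order all_algebra.
From mathcomp Require Import all_classical all_reals all_analysis.
From mathcomp Require Import ring lra.
From mathcomp Require Import measurable_realfun ftc.
Import Order.TTheory GRing.Theory Num.Theory.
Import numFieldNormedType.Exports.
Local Open Scope classical_set_scope.
Local Open Scope ring_scope.

Lemma near_leftP (R : realType) (x : R) (P : R -> Prop) :
  (\forall y \near x^'-, P y) <-> exists2 d, 0 < d & forall y, x - d < y < x -> P y.
Proof.
split.
  rewrite nbhs_left0P => -[d /= d0 H].
  exists d => // y /andP[h1 h2].
  have -> : y = x - (x - y) by ring.
  apply: H => /=; last by rewrite subr_gt0.
  rewrite /ball /= sub0r normrN ger0_norm; [lra | lra].
move=> [d d0 H]; near=> y; apply: H; apply/andP; split.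
  near: y; apply: nbhs_left_gt; lra.
near: y; exact: nbhs_left_lt.
Unshelve. all: by end_near. Qed.


Lemma cvg_near_eq (R : realType) (T : Type) (F : set_system T) (FF : Filter F)
  (f g : T -> R) (l : R) :
  (\forall x \near F, f x = g x) -> f @ F --> l -> g @ F --> l.
Proof. by move=> e; apply: cvg_trans; exact: near_eq_cvg. Qed.


Lemma is_derive_derive1 (R : realType) (f : R -> R) (x df : R) :
  is_derive x 1 f df -> derive1 f x = df.
Proof. by move=> H; rewrite derive1E; exact: derive_val. Qed.

Lemma is_derive_derivable (R : realType) (f : R -> R) (x df : R) :
  is_derive x 1 f df -> derivable f x 1.
Proof. by case. Qed.

Lemma is_derive_cont (R : realType) (f : R -> R) (x df : R) :
  is_derive x 1 f df -> {for x, continuous f}.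
Proof.
move=> H; apply: differentiable_continuous; apply/derivable1_diffP.
exact: is_derive_derivable H.
Qed.

Section S.
Context {R : realType} (Q : R -> R) (A m u0 : R) (u : R -> R) (rbar : R).
Hypothesis HEL : H_EL Q A m.
Hypothesis Hu0 : u0 \in setA Q.
Hypothesis Hsol : is_solution_P Q u0 u rbar.

Let lam := Rq Q u0.
Let rb0 : 0 < rbar. Proof. by case: Hsol => -[]. Qed.
Let ucont : continuous u. Proof. by case: Hsol => -[]. Qed.
Let upos x : (0 < u x) <-> (`|x| < rbar). Proof. by case: Hsol => _ [H _] _ _ _; exact: H. Qed.
Let uzero {x} : rbar <= `|x| -> u x = 0. Proof. by case: Hsol => _ [_ H] _ _ _; exact: H. Qed.
Let uder {x} : `|x| < rbar -> derivable u x 1. Proof. by case: Hsol => _ _ /(_ x) H _ _ /H[]. Qed.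
Let u'der {x} : `|x| < rbar -> derivable (derive1 u) x 1. Proof. by case: Hsol => _ _ /(_ x) H _ _ /H[]. Qed.
Let uode {x} : `|x| < rbar -> - (derive1 (derive1 u)) x + (derive1 Q) (u x) = lam. Proof. by case: Hsol => _ _ /(_ x) H _ _ /H[]. Qed.
Let uu0 : u 0 = u0. Proof. by case: Hsol => _ _ _ [[]]. Qed.
Let du0 : (derive1 u) 0 = 0. Proof. by case: Hsol => _ _ _ [[]]. Qed.
Let ueven x : u (- x) = u x. Proof. by case: Hsol => _ _ _ [_]. Qed.
Let udecr x y : 0 < x -> x < y -> y < rbar -> u y < u x. Proof. by case: Hsol => _ _ _ _; apply. Qed.
Let u0pos : 0 < u0. Proof. by move: Hu0; rewrite inE => -[]. Qed.
Let dQ {x} : 0 < x -> derivable Q x 1. Proof. by case: HEL => /(_ x) H _ _ _ _ /H[]. Qed.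
Let cQ' {x} : 0 < x -> {for x, continuous (derive1 Q)}. Proof. by case: HEL => /(_ x) H _ _ _ _ /H[]. Qed.
Let A0 : 0 < A. Proof. by case: HEL => _ _ []. Qed.
Let m1 : 1 < m. Proof. by case: HEL => _ _ []. Qed.
Let m3 : m < 3. Proof. by case: HEL => _ _ []. Qed.
Let Qlim : (fun s => Q s / (A * powR s (1 - m))) s @[s --> 0^'+] --> (1 : R).
Proof. by case: HEL. Qed.

Lemma energy x : `|x| < rbar -> (derive1 u) x ^+ 2 = 2 * (Q (u x) - lam * u x).
Proof.
pose E : R -> R := ((derive1 u) ^+ 2 - 2 \*: (Q \o u) + (2 * lam) \*: u).
have dE (y : R) : `|y| < rbar -> is_derive y 1 E 0.
  move=> hy; have uy : 0 < u y by apply/upos.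
  have h1 := derivableP (u'der hy); rewrite -derive1E in h1.
  have h0 := derivableP (uder hy); rewrite -derive1E in h0.
  have hQ := derivableP (dQ uy); rewrite -derive1E in hQ.
  have hQu : is_derive y 1 (Q \o u) ((derive1 Q) (u y) * (derive1 u) y) by exact: is_derive1_comp.
  have := is_deriveD (is_deriveB (is_deriveX 2 h1) (is_deriveZ 2 hQu)) (is_deriveZ (2*lam) h0).
  move/is_derive_eq; apply.
  have e := uode hy.
  rewrite /GRing.scale /= expr1.
  have -> : derive1 (derive1 u) y = derive1 Q (u y) - lam by rewrite -e; ring.
  ring.
have cE a b : `|a| < rbar -> `|b| < rbar -> a < b -> E b = E a.
  move=> ha hb ab.
  have sub z : z \in `[a, b] -> `|z| < rbar.
    rewrite in_itv /= => /andP[az zb].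
    move: ha hb; rewrite !ltr_norml => /andP[h1 h2] /andP[h3 h4].
    apply/andP; split; lra.
  have dE' : {in `[a, b], forall z, derivable E z 1}.
    by move=> z hz; have [] := dE z (sub z hz).
  have [c _] := MVT ab (fun z hz => dE z (sub z (subset_itv_oo_cc hz)))
    (derivable_within_continuous dE').
  by move=> /eqP; rewrite mul0r subr_eq0 => /eqP.
move=> hx.
have Ee z : E z = derive1 u z ^+ 2 - 2 * Q (u z) + 2 * lam * u z by [].
have E0 : E 0 = 0.
  by rewrite Ee du0 uu0 /lam /Rq; field; rewrite gt_eqF.
have Ex : E x = 0.
  have [x0|x0|->] := ltgtP x 0.
  - by rewrite -(cE x 0 hx _ x0) ?normr0.
  - by rewrite (cE 0 x _ hx x0) ?normr0.
  - exact: E0.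
have : derive1 u x ^+ 2 - 2 * (Q (u x) - lam * u x) = E x by rewrite Ee; ring.
by rewrite Ex => /eqP; rewrite subr_eq0 => /eqP.
Qed.

Let p := (m + 1) / 2.
Let p1 : 1 < p. Proof. by rewrite /p ltr_pdivlMr // mul1r; move: m1; lra. Qed.
Let p0 : 0 < p. Proof. by apply: lt_trans p1. Qed.

Lemma upos' {x} : 0 < x < rbar -> 0 < u x.
Proof. by move=> /andP[h1 h2]; apply/upos; rewrite gtr0_norm. Qed.

Lemma in_D {x} : 0 < x < rbar -> `|x| < rbar.
Proof. by move=> /andP[h1 h2]; rewrite gtr0_norm. Qed.

Lemma du_le0 {x} : 0 < x < rbar -> derive1 u x <= 0.
Proof.
move=> hx.
apply: (@decr_derive1_le0_itv _ u false true 0 rbar).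
- by move=> z hz; apply: uder; apply: in_D; move: hz; rewrite inE /= in_itv.
- move=> a b; rewrite !in_itv /= => /andP[a0 ar] /andP[b0 br] ab.
  exact: udecr.
- by rewrite in_itv.
Qed.

Lemma du_ge0 {x} : - rbar < x < 0 -> 0 <= derive1 u x.
Proof.
move=> hx.
apply: (@incr_derive1_ge0_itv _ u false true (- rbar) 0).
- move=> z; rewrite inE /= in_itv /= => /andP[h1 h2]; apply: uder.
  by rewrite ltr0_norm // ltrNl.
- move=> a b; rewrite !in_itv /= => /andP[a0 ar] /andP[b0 br] ab.
  rewrite -(ueven a) -(ueven b); apply: udecr; lra.
- by rewrite in_itv.
Qed.

Lemma is_derive_upow (r x : R) : `|x| < rbar ->
  is_derive x 1 (fun z => u z `^ r) (r * u x `^ (r - 1) * derive1 u x).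
Proof.
move=> hx; have ux : 0 < u x by apply/upos.
have h0 := derivableP (uder hx); rewrite -derive1E in h0.
exact: (is_derive1_comp (is_derive1_powR r ux) h0).
Qed.


Lemma u_to_0 : u x @[x --> rbar^'-] --> 0^'+.
Proof.
have h1 : u x @[x --> rbar^'-] --> 0.
  have := cvg_at_left_filter (ucont rbar).
  by rewrite uzero // ger0_norm // ltW.
have h2 : \forall x \near rbar^'-, 0 < u x.
  apply/near_leftP; exists rbar => // y; rewrite subrr => hy; exact: upos'.
move=> P HP.
have h3 := h1 _ HP.
apply: filterS2 h2 h3 => x /= hx H; exact: H hx.
Qed.

Let G (s : R) := p ^+ 2 * (s `^ (m - 1) * (2 * (Q s - lam * s))).

Lemma Glim : G s @[s --> 0^'+] --> p ^+ 2 * (2 * A).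
Proof.
have e : \forall s \near 0^'+,
    p ^+ 2 * (2 * (A * (Q s / (A * s `^ (1 - m)))) - 2 * lam * s `^ m) = G s.
  near=> s.
  have s0 : 0 < s by near: s; exact: nbhs_right_gt.
  rewrite /G.
  have -> : 1 - m = - (m - 1) by ring.
  rewrite powRN.
  have -> : s `^ m = s * s `^ (m - 1).
    rewrite mulr_powRB1 ?(ltW s0) //; move: m1; lra.
  have ? : s `^ (m - 1) != 0 by rewrite gt_eqF // powR_gt0.
  by field; apply/andP; split; rewrite gt_eqF // powR_gt0.
apply: cvg_near_eq e _.
have -> : p ^+ 2 * (2 * A) = p ^+ 2 * (2 * (A * 1) - 2 * lam * 0) by ring.
apply: cvgMl_tmp; apply: cvgB.
  by apply: cvgMl_tmp; apply: cvgMl_tmp; exact: Qlim.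
apply: cvgMl_tmp; apply: powR_cvg0; move: m1; lra.
Unshelve. all: by end_near. Qed.

Let psi (x : R) := - (p * u x `^ (p - 1) * derive1 u x).
Let B := p ^+ 2 * (2 * A).
Let L := Num.sqrt B.
Let B0 : 0 < B. Proof. by rewrite /B mulr_gt0 // ?exprn_gt0 // mulr_gt0. Qed.
Let L0 : 0 < L. Proof. by rewrite /L sqrtr_gt0. Qed.

Lemma psi_ge0 {x} : 0 < x < rbar -> 0 <= psi x.
Proof.
move=> hx; rewrite /psi oppr_ge0 mulr_ge0_le0 ?(du_le0 hx) //.
by rewrite mulr_ge0 ?powR_ge0 // ltW.
Qed.

Lemma psi_sqrt {x} : 0 < x < rbar -> psi x = Num.sqrt (G (u x)).
Proof.
move=> hx; have ux := upos' hx; have hD := in_D hx.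
have en := energy x hD.
have h0 := psi_ge0 hx.
rewrite -(ger0_norm h0) -sqrtr_sqr; congr Num.sqrt.
have hpow : (u x `^ (p - 1)) ^+ 2 = u x `^ (m - 1).
  rewrite -powR_mulrn ?powR_ge0 // -powRrM; by congr powR; rewrite /p; field.
by rewrite /psi /G sqrrN !exprMn hpow en; ring.
Qed.

Lemma psi_lim : psi x @[x --> rbar^'-] --> L.
Proof.
have e : \forall x \near rbar^'-, Num.sqrt (G (u x)) = psi x.
  apply/near_leftP; exists rbar => // y; rewrite subrr => hy.
  by rewrite psi_sqrt.
apply: cvg_near_eq e _.
exact: (cvg_comp _ _ (cvg_comp _ _ u_to_0 Glim) (@sqrt_continuous _ B)).
Qed.

Let v (x : R) := u x `^ p.
Let phi (x : R) := v x / (rbar - x).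

Lemma v_rbar : v rbar = 0.
Proof. by rewrite /v uzero ?powR0 ?gt_eqF // ger0_norm // ltW. Qed.

Lemma phi_psi y : 0 < y < rbar -> exists2 c, y < c < rbar & phi y = psi c.
Proof.
move=> /andP[y0 yr].
pose df z := p * u z `^ (p - 1) * derive1 u z.
have hd z : z \in `]y, rbar[ -> is_derive z 1 v (df z).
  rewrite in_itv /= => /andP[h1 h2]; apply: is_derive_upow; apply: in_D.
  by apply/andP; split => //; apply: lt_trans h1.
have cv : {within `[y, rbar], continuous v}.
  apply: derivable_oo_LRcontinuous_within; split.
  - by move=> z /hd [].
  - apply: cvg_at_right_filter; apply: differentiable_continuous.
    apply/derivable1_diffP.
    have [] := @is_derive_upow p y (in_D _); first by apply/andP; split.
    by [].
  - rewrite v_rbar; exact: (cvg_comp _ _ u_to_0 (powR_cvg0 p0)).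
have [c hc] := MVT yr hd cv.
move: hc; rewrite in_itv /= => /andP[h1 h2] hmvt.
exists c; first by apply/andP.
rewrite /phi /psi -/(df c); move: hmvt; rewrite v_rbar => hmvt.
have -> : v y = - (df c * (rbar - y)) by rewrite -hmvt; ring.
by field; rewrite subr_eq0 gt_eqF.
Qed.

Lemma phi_lim : phi x @[x --> rbar^'-] --> L.
Proof.
apply/cvgrPdist_lt => e e0.
have [d d0 H] := (near_leftP _ _ _).1 ((cvgrPdist_lt _ _).1 psi_lim e e0).
apply/near_leftP; exists (Num.min d rbar); first by rewrite lt_min d0 rb0.
move=> y /andP[hy1 hy2].
have hm1 : Num.min d rbar <= rbar by rewrite ge_min lexx orbT.
have hm2 : Num.min d rbar <= d by rewrite ge_min lexx.
have y0 : 0 < y by move: hy1 hm1; lra.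
have [c /andP[c1 c2] ->] := phi_psi y (ltac:(by apply/andP)).
apply: H; apply/andP; split => //; move: hy1 hm2 c1; lra.
Qed.

Let K := powR (A * (m + 1) ^+ 2 / 2) (1 / (m + 1)).

Lemma K_L : K = L `^ (p^-1).
Proof.
have hm : m + 1 != 0 by rewrite gt_eqF //; move: m1; lra.
rewrite /L -powR12_sqrt ?(ltW B0) // -powRrM /K.
by congr powR; rewrite /B /p; field.
Qed.

Let K0 : 0 < K. Proof. by rewrite K_L powR_gt0. Qed.

Lemma powR_cont (r a : R) : 0 < a -> {for a, continuous (fun y : R => y `^ r)}.
Proof.
move=> a0; apply: differentiable_continuous; apply/derivable1_diffP.
by apply: derivable_powR; rewrite in_itv /= andbT.
Qed.

Lemma phi_gt0 {y} : 0 < y < rbar -> 0 < phi y.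
Proof.
move=> /[dup] hy /andP[y0 yr].
by rewrite /phi divr_gt0 ?subr_gt0 // /v powR_gt0 // upos'.
Qed.

Lemma u_phi {y} : 0 < y < rbar -> u y = phi y `^ p^-1 * (rbar - y) `^ p^-1.
Proof.
move=> /[dup] hy /andP[y0 yr].
have d0 : 0 < rbar - y by rewrite subr_gt0.
rewrite -powRM; try exact: ltW (phi_gt0 hy); try exact: ltW d0.
rewrite /phi /v divfK ?gt_eqF // -powRrM mulfV ?gt_eqF // powRr1 //.
exact: ltW (upos' hy).
Qed.

Lemma main1 :
  (fun x => u x / (K * powR (rbar - x) (2 / (m + 1)))) x @[x --> rbar^'-] --> (1 : R).
Proof.
have e : \forall x \near rbar^'-,
    phi x `^ p^-1 / K = u x / (K * (rbar - x) `^ (2 / (m + 1))).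
  apply/near_leftP; exists rbar => // y; rewrite subrr => /[dup] hy /andP[y0 yr].
  have d0 : 0 < rbar - y by rewrite subr_gt0.
  have -> : 2 / (m + 1) = p^-1 by rewrite /p; field; rewrite gt_eqF //; move: m1; lra.
  rewrite (u_phi hy); field.
  by apply/andP; split; rewrite gt_eqF // powR_gt0.
apply: cvg_near_eq e _.
have -> : (1 : R) = L `^ p^-1 / K by rewrite -K_L divff // gt_eqF.
apply: cvgMr_tmp.
exact: (cvg_comp _ _ phi_lim (powR_cont p^-1 L L0)).
Qed.

Let q := 1 - p^-1.

Lemma main2 :
  (fun x => (derive1 u) x / (- (2 / (m + 1)) * K * powR (rbar - x) (2 / (m + 1) - 1)))
     x @[x --> rbar^'-] --> (1 : R).
Proof.
have hm : 2 / (m + 1) = p^-1 by rewrite /p; field; rewrite gt_eqF //; move: m1; lra.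
have e : \forall x \near rbar^'-,
    psi x / (K * phi x `^ q) =
    derive1 u x / (- (2 / (m + 1)) * K * (rbar - x) `^ (2 / (m + 1) - 1)).
  apply/near_leftP; exists rbar => // y; rewrite subrr => /[dup] hy /andP[y0 yr].
  have d0 : 0 < rbar - y by rewrite subr_gt0.
  have hup : u y `^ (p - 1) = phi y `^ q * (rbar - y) `^ q.
    rewrite (u_phi hy) powRM ?powR_ge0 // -!powRrM.
    by have -> : p^-1 * (p - 1) = q by rewrite /q; field; rewrite gt_eqF.
  have -> : 2 / (m + 1) - 1 = - q by rewrite hm /q; ring.
  rewrite powRN hm /psi hup.
  have ? : phi y `^ q != 0 by rewrite gt_eqF // powR_gt0 // phi_gt0.
  have ? : (rbar - y) `^ q != 0 by rewrite gt_eqF // powR_gt0.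
  field.
  have ? : K != 0 by rewrite gt_eqF.
  have ? : p != 0 by rewrite gt_eqF.
  by apply/and4P.
apply: cvg_near_eq e _.
have hKL : K * L `^ q = L.
  rewrite K_L -powRD; last by apply/implyP => _; rewrite gt_eqF.
  have -> : p^-1 + q = 1 by rewrite /q; ring.
  by rewrite powRr1 // ltW.
have -> : (1 : R) = L / (K * L `^ q) by rewrite hKL divff // gt_eqF.
apply: cvgM; first exact: psi_lim.
apply: cvgV; first by rewrite hKL gt_eqF.
apply: cvgMl_tmp.
exact: (cvg_comp _ _ phi_lim (powR_cont q L L0)).
Qed.

Let gg (x : R) := derive1 u x * derive1 u x.

Lemma du_cont x : `|x| < rbar -> {for x, continuous (derive1 u)}.
Proof.
move=> hx; apply: differentiable_continuous; apply/derivable1_diffP.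
exact: u'der hx.
Qed.

Lemma gg_cont x : `|x| < rbar -> {for x, continuous gg}.
Proof. by move=> hx; apply: cvgM; exact: du_cont. Qed.

Lemma w_cont (r x : R) : `|x| < rbar ->
  {for x, continuous (fun y => u y `^ r * derive1 u y)}.
Proof.
move=> hx; have ux : 0 < u x by apply/upos.
apply: cvgM; last exact: du_cont.
exact: (cvg_comp _ _ (ucont x) (powR_cont r (u x) ux)).
Qed.

Lemma gg_even x : `|x| < rbar -> gg (- x) = gg x.
Proof.
move=> hx; have hx' : `|- x| < rbar by rewrite normrN.
by rewrite /gg -!expr2 (energy _ hx) (energy _ hx') ueven.
Qed.

Lemma gg_ge0 x : 0 <= gg x.
Proof. by rewrite /gg -expr2 sqr_ge0. Qed.

Lemma gg_bound_pos {x} : 0 < x < rbar -> psi x <= L + 1 ->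
  gg x <= (L + 1) / p * (u x `^ (1 - p) * `|derive1 u x|).
Proof.
move=> hx hpsi.
have ux := upos' hx.
have a0 : 0 < u x `^ (p - 1) by rewrite powR_gt0.
have -> : u x `^ (1 - p) = (u x `^ (p - 1))^-1.
  by rewrite -powRN; congr powR; ring.
have hn : `|derive1 u x| = - derive1 u x by rewrite ler0_norm // du_le0.
have hg : gg x = `|derive1 u x| * `|derive1 u x| by rewrite hn /gg; ring.
rewrite hg.
move: hpsi; rewrite /psi -mulrN -hn => hpsi.
set w := `|derive1 u x| in hpsi *.
set a := u x `^ (p - 1) in a0 hpsi *.
have ? : a != 0 by rewrite gt_eqF.
have ? : p != 0 by rewrite gt_eqF.
have -> : w * w = (w / (p * a)) * (p * a * w) by field; apply/andP.
have -> : (L + 1) / p * (a^-1 * w) = (w / (p * a)) * (L + 1) by field; apply/andP.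
apply: ler_wpM2l => //.
by rewrite divr_ge0 ?normr_ge0 // mulr_ge0 // ltW.
Qed.

Lemma PB_ex : exists M c, [/\ 0 <= M, 0 <= c &
  forall x, `|x| < rbar -> gg x <= M + c * (u x `^ (1 - p) * `|derive1 u x|)].
Proof.
have [d d0 H] := (near_leftP _ _ _).1 ((cvgrPdist_lt _ _).1 psi_lim 1 ltr01).
pose x0 := rbar - Num.min d rbar / 2.
have hm1 : Num.min d rbar <= rbar by rewrite ge_min lexx orbT.
have hm2 : Num.min d rbar <= d by rewrite ge_min lexx.
have hm0 : 0 < Num.min d rbar by rewrite lt_min d0 rb0.
have x00 : 0 < x0 by rewrite /x0; move: hm1 hm0 rb0; lra.
have x0r : x0 < rbar by rewrite /x0; move: hm0; lra.
have sub0 y : `|y| <= x0 -> `|y| < rbar by move=> h; apply: le_lt_trans h x0r.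
have cg : {within `[- x0, x0], continuous gg}.
  apply: continuous_in_subspaceT => y; rewrite inE /= in_itv /= => hy.
  by apply: gg_cont; apply: sub0; rewrite ler_norml.
have hx0x0 : - x0 <= x0 by move: x00; lra.
have [cm hcm Mmax] := EVT_max hx0x0 cg.
exists (gg cm), ((L + 1) / p); split.
- exact: gg_ge0.
- by rewrite divr_ge0 ?addr_ge0 // ltW.
move=> x hx.
have t0 : 0 <= (L + 1) / p * (u x `^ (1 - p) * `|derive1 u x|).
  apply: mulr_ge0; last by rewrite mulr_ge0 // powR_ge0.
  by apply: divr_ge0; [apply: addr_ge0; [exact: ltW L0|] | exact: ltW p0].
have hM : 0 <= gg cm := gg_ge0 cm.
have [hxl|hxg] := leP `|x| x0.
  apply: le_trans (Mmax x _) _; first by rewrite in_itv /= -ler_norml.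
  by rewrite lerDl.
have pos y : x0 < y < rbar -> psi y <= L + 1.
  move=> /andP[hy1 hy2].
  have : `|L - psi y| < 1.
    apply: H; apply/andP; split => //.
    by move: hy1 hm2 d0; rewrite /x0; lra.
  by rewrite ltr_norml => /andP[h1 h2]; move: h1; lra.
case: (ltP 0 x) => hx0.
  have hx1 : 0 < x < rbar by apply/andP; split => //; move: hx; rewrite gtr0_norm.
  have := gg_bound_pos hx1 (pos x _).
  move/(_ ltac:(by apply/andP; split; [move: hxg; rewrite gtr0_norm | case/andP: hx1])).
  by move=> h; apply: le_trans h _; rewrite lerDr.
have hxn : `|x| = - x by rewrite ler0_norm.
have hy : 0 < - x < rbar.
  apply/andP; split; last by rewrite -hxn.
  by rewrite -hxn (lt_trans x00).
have := gg_bound_pos hy (pos (- x) ltac:(by apply/andP; split; rewrite -hxn //; case/andP: hy)).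
rewrite gg_even // ueven.
have habs : `|derive1 u (- x)| = `|derive1 u x|.
  rewrite -[LHS]sqrtr_sqr -[RHS]sqrtr_sqr !expr2.
  by rewrite -[derive1 u (- x) * _]/(gg (- x)) gg_even.
by rewrite habs => h; apply: le_trans h _; rewrite lerDr.
Qed.

Local Notation mu := (@lebesgue_measure R).

Lemma meas_sub (f : R -> R) (S : set R) :
  (forall x, `|x| < rbar -> {for x, continuous f}) ->
  measurable S -> S `<=` `]- rbar, rbar[ -> measurable_fun S f.
Proof.
move=> Hc mS sS.
apply: (measurable_funS (E := `]- rbar, rbar[)) => //.
apply: open_continuous_measurable_fun; first exact: interval_open.
by move=> x; rewrite inE /= in_itv /= => hx; apply: Hc; rewrite ltr_norml.
Qed.

Let p2 : 0 < 2 - p.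
Proof. by rewrite /p; move: m3; lra. Qed.

Lemma int_gen (M c s lo hi : R) : 0 <= M -> 0 <= c ->
  (forall x, `|x| < rbar -> gg x <= M + c * (u x `^ (1 - p) * `|derive1 u x|)) ->
  - rbar < lo -> lo < hi -> hi < rbar ->
  (forall x, lo <= x <= hi -> `|derive1 u x| = - (s * derive1 u x)) ->
  (\int[mu]_(x in `[lo, hi]) (gg x)%:E <=
    ((M * hi - s * c / (2 - p) * u hi `^ (2 - p)) -
     (M * lo - s * c / (2 - p) * u lo `^ (2 - p)))%:E)%E.
Proof.
move=> M0 c0 PB hlo lohi hhi hs.
pose f1 x := M - s * c * (u x `^ (1 - p) * derive1 u x).
pose F1 x := M * x - s * c / (2 - p) * u x `^ (2 - p).
have inD x : lo <= x <= hi -> `|x| < rbar.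
  by move=> /andP[h1 h2]; rewrite ltr_norml; apply/andP; split; lra.
have dF1 (x : R) : `|x| < rbar -> is_derive x 1 F1 (f1 x).
  move=> hx.
  have := is_deriveB (is_deriveZ M (@is_derive_id _ _ x 1))
    (is_deriveZ (s * c / (2 - p)) (is_derive_upow (2 - p) x hx)).
  move/is_derive_eq; apply.
  have -> : 2 - p - 1 = 1 - p by ring.
  by rewrite /f1 /GRing.scale /=; field; rewrite gt_eqF.
have cf1 : {within `[lo, hi], continuous f1}.
  apply: continuous_in_subspaceT => x; rewrite inE /= in_itv /= => hx.
  apply: cvgB; first exact: cvg_cst.
  by apply: cvgMl_tmp; apply: w_cont; apply: inD.
have hd : derivable_oo_LRcontinuous F1 lo hi.
  split.
  - move=> x; rewrite in_itv /= => /andP[h1 h2].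
    by apply: is_derive_derivable (dF1 x _); apply: inD; rewrite !ltW.
  - apply: cvg_at_right_filter; apply: is_derive_cont (dF1 lo _).
    by apply: inD; rewrite lexx ltW.
  - apply: cvg_at_left_filter; apply: is_derive_cont (dF1 hi _).
    by apply: inD; rewrite lexx ltW.
have hder : {in `]lo, hi[, (derive1 F1) =1 f1}.
  move=> x; rewrite in_itv /= => /andP[h1 h2].
  by apply: is_derive_derive1 (dF1 x _); apply: inD; rewrite !ltW.
have hFTC := continuous_FTC2 lohi cf1 hd hder.
have mS : `[lo, hi] `<=` `]- rbar, rbar[.
  by move=> x /=; rewrite !in_itv /= => /andP[h1 h2]; apply/andP; split; lra.
have le1 : (\int[mu]_(x in `[lo, hi]) (gg x)%:E <=
    \int[mu]_(x in `[lo, hi]) (f1 x)%:E)%E.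
  apply: ge0_le_integral => //.
  - by move=> x _; rewrite lee_fin; exact: gg_ge0.
  - apply/measurable_EFinP; apply: meas_sub => //.
    by move=> x hx; apply: gg_cont.
  - apply/measurable_EFinP; apply: meas_sub => //.
    move=> x hx; apply: cvgB; first exact: cvg_cst.
    by apply: cvgMl_tmp; apply: w_cont.
  - move=> x /=; rewrite in_itv /= => hx; rewrite lee_fin.
    apply: le_trans (PB x (inD x hx)) _.
    by rewrite /f1 (hs x hx) lerD2l le_eqVlt; apply/orP; left; apply/eqP; ring.
apply: le_trans le1 _.
by rewrite hFTC -EFinB.
Qed.

Lemma int_sym (M c a : R) : 0 <= M -> 0 <= c ->
  (forall x, `|x| < rbar -> gg x <= M + c * (u x `^ (1 - p) * `|derive1 u x|)) ->
  0 < a < rbar ->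
  (\int[mu]_(x in `[(- a)%R, a]) (gg x)%:E <=
    (2 * (M * rbar + c / (2 - p) * u0 `^ (2 - p)))%:E)%E.
Proof.
move=> M0 c0 PB /andP[a0 ar].
have mf : measurable_fun `]- rbar, rbar[ (fun x => (gg x)%:E).
  apply/measurable_EFinP; apply: meas_sub => //.
  by move=> x hx; apply: gg_cont.
have sU : `[- a, a]%classic = `[- a, 0]%classic `|` `]0, a]%classic :> set R.
  by rewrite -itv_bndbnd_setU // bnd_simp; [move: a0; lra | exact: ltW].
have sD (S : set R) : S `<=` `[- a, a]%classic -> S `<=` `]- rbar, rbar[%classic.
  move=> hS x /hS /=; rewrite !in_itv /= => /andP[h1 h2].
  by apply/andP; split; move: ar; lra.
rewrite sU ge0_integral_setU //=; first last.
- apply/disj_set2P; rewrite -subset0 => z /=; rewrite !in_itv /=.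
  by move=> -[/andP[_ z0] /andP[z0' _]]; move: z0 z0'; lra.
- by move=> x _; rewrite lee_fin; exact: gg_ge0.
- by apply: measurable_funS mf => //; apply: sD; rewrite sU.
rewrite integral_itv_obnd_cbnd; last first.
  by apply: measurable_funS mf => //; apply: sD; rewrite sU => x hx; right.
have hneg := @int_gen M c (-1) (- a) 0 M0 c0 PB.
have hpos := @int_gen M c 1 0 a M0 c0 PB.
have h1 : - rbar < - a by rewrite ltrN2.
have h2 : - a < 0 by rewrite oppr_lt0.
have hn := hneg h1 h2 rb0.
have hp := hpos (ltac:(by rewrite oppr_lt0)) a0 ar.
have hn' : forall x, - a <= x <= 0 -> `|derive1 u x| = - (-1 * derive1 u x).
  move=> x /andP[x1 x2]; rewrite mulN1r opprK ger0_norm //.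
  move: x2; rewrite le_eqVlt => /orP[/eqP ->|x0]; first by rewrite du0.
  by apply: du_ge0; apply/andP; split => //; apply: lt_le_trans h1 x1.
have hp' : forall x, 0 <= x <= a -> `|derive1 u x| = - (1 * derive1 u x).
  move=> x /andP[x1 x2]; rewrite mul1r ler0_norm //.
  move: x1; rewrite le_eqVlt => /orP[/eqP <-|x0]; first by rewrite du0.
  by apply: du_le0; apply/andP; split => //; apply: le_lt_trans x2 ar.
pose k := c / (2 - p).
have k0 : 0 <= k by rewrite /k divr_ge0 // ltW.
have hn2 : (\int[mu]_(x in `[(- a)%R, 0%R]) (gg x)%:E <=
    (M * a + k * (u0 `^ (2 - p) - u (- a) `^ (2 - p)))%:E)%E.
  apply: le_trans (hn hn') _; rewrite lee_fin uu0 le_eqVlt; apply/orP; left.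
  by apply/eqP; rewrite /k; field; rewrite gt_eqF.
have hp2 : (\int[mu]_(x in `[0%R, a]) (gg x)%:E <=
    (M * a + k * (u0 `^ (2 - p) - u a `^ (2 - p)))%:E)%E.
  apply: le_trans (hp hp') _; rewrite lee_fin uu0 le_eqVlt; apply/orP; left.
  by apply/eqP; rewrite /k; field; rewrite gt_eqF.
apply: le_trans (leeD hn2 hp2) _.
rewrite -EFinD lee_fin.
have wa : 0 <= k * u a `^ (2 - p) by rewrite mulr_ge0 // powR_ge0.
have wna : 0 <= k * u (- a) `^ (2 - p) by rewrite mulr_ge0 // powR_ge0.
have Ma : M * a <= M * rbar by rewrite ler_wpM2l // ltW.
rewrite -/k !mulrBr.
have hk : 0 <= k * u0 `^ (2 - p) by rewrite mulr_ge0 // powR_ge0.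
move: wa wna Ma hk; lra.
Qed.

Lemma main3 : mu.-integrable `]- rbar, rbar[ (fun x => (((derive1 u) x) ^+ 2)%:E).
Proof.
have -> : (fun x => (((derive1 u) x) ^+ 2)%:E) = (fun x => (gg x)%:E).
  by apply/funext => x; rewrite /gg expr2.
have [M [c [M0 c0 PB]]] := PB_ex.
pose Bd := 2 * (M * rbar + c / (2 - p) * u0 `^ (2 - p)).
have mD : measurable (`]- rbar, rbar[ : set R) by exact: measurable_itv.
have mf : measurable_fun `]- rbar, rbar[ (fun x => (gg x)%:E).
  apply/measurable_EFinP; apply: meas_sub => //.
  by move=> x hx; apply: gg_cont.
apply/integrableP; split => //.
have -> : (\int[mu]_(x in `](- rbar)%R, rbar[) `|(gg x)%:E| =
    \int[mu]_(x in `](- rbar)%R, rbar[) (gg x)%:E)%E.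
  by apply: eq_integral => x _; rewrite gee0_abs // lee_fin gg_ge0.
apply: (le_lt_trans _ (ltry Bd)).
pose an (n : nat) := rbar - rbar / n.+2%:R.
have an_in n : 0 < an n < rbar.
  have t0 : 0 < rbar / n.+2%:R by rewrite divr_gt0.
  have e : rbar / n.+2%:R * n.+2%:R = rbar by rewrite divfK // pnatr_eq0.
  have t1 : rbar / n.+2%:R < rbar.
    rewrite -[X in _ < X]e; rewrite -[X in X < _]mulr1 ltr_pM2l //.
    by rewrite ltr1n.
  rewrite /an; set t := rbar / n.+2%:R in t0 t1 *; clearbody t; apply/andP; split; move: t0 t1; lra.
have an_nd n k : (n <= k)%N -> an n <= an k.
  move=> nk; rewrite /an lerD2l lerN2 ler_pM2l // lef_pV2 ?ler_nat ?ltnS //.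
  - by rewrite posrE ltr0n.
  - by rewrite posrE ltr0n.
pose I n := `[- an n, an n]%classic.
have ID n : I n `<=` `]- rbar, rbar[%classic.
  move=> x; rewrite /I /= !in_itv /= => /andP[h1 h2].
  by have := an_in n; move=> /andP[h3 h4]; apply/andP; split; move: h1 h2 h3 h4; lra.
pose g' n := (fun x => (gg x)%:E) \_ (I n).
have mg' n : measurable_fun `]- rbar, rbar[ (g' n).
  apply: (measurable_funS measurableT) => //.
  apply/(measurable_restrictT _ _).1; first exact: measurable_itv.
  exact: measurable_funS mf.
have g'0 n x : (`]- rbar, rbar[%classic : set R) x -> (0 <= g' n x)%E.
  by move=> _; rewrite /g' patchE; case: ifP => _ //; rewrite lee_fin gg_ge0.
have nd_g' x : (`]- rbar, rbar[%classic : set R) x -> {homo g'^~ x : n m / (n <= m)%N >-> (n <= m)%E}.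
  move=> _ n k nk; rewrite /g' !patchE.
  case: ifPn => hxn.
    have -> : x \in I k.
      move: hxn; rewrite /I !inE /= !in_itv /= => /andP[h1 h2].
      have := an_nd n k nk => h3.
      by apply/andP; split; move: h1 h2 h3; lra.
    by [].
  by case: ifP => _ //; rewrite lee_fin gg_ge0.
have hlim x : (`]- rbar, rbar[%classic : set R) x -> limn (g'^~ x) = (gg x)%:E.
  rewrite /= in_itv /= => hx.
  have hx' : `|x| < rbar by rewrite ltr_norml.
  apply: cvg_lim => //; apply: cvg_near_cst.
  have d0 : 0 < rbar - `|x| by rewrite subr_gt0.
  pose N := Num.bound (rbar / (rbar - `|x|)).
  have hN : rbar / (rbar - `|x|) < N%:R.
    by apply: archi_boundP; rewrite divr_ge0 // ltW.
  exists N => // n /= hn.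
  rewrite /g' patchE ifT //.
  rewrite /I inE /= in_itv /= -ler_norml /an.
  have hn2 : (N%:R : R) <= n.+2%:R by rewrite ler_nat (leq_trans hn) // ltnW.
  have h : rbar / (rbar - `|x|) < n.+2%:R by apply: lt_le_trans hN hn2.
  have h' : rbar < n.+2%:R * (rbar - `|x|) by rewrite -ltr_pdivrMr.
  have h'' : rbar / n.+2%:R < rbar - `|x|.
    by rewrite ltr_pdivrMr ?ltr0n // mulrC.
  by move: h''; set t := rbar / n.+2%:R; clearbody t; move=> h3; apply: ltW; lra.
have e1 : (\int[mu]_(x in `](- rbar)%R, rbar[) (gg x)%:E =
    \int[mu]_(x in `](- rbar)%R, rbar[) (fun x => limn (g'^~ x)) x)%E.
  by apply: eq_integral => x hx; rewrite hlim //; move: hx; rewrite inE.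
rewrite e1 (monotone_convergence mu mD mg' g'0 nd_g').
apply: lime_le.
  exact: (cvgP _ (@cvg_monotone_convergence _ _ _ mu _ mD _ mg' g'0 nd_g')).
apply: nearW => n.
rewrite /g' -integral_mkcondr setIidr //.
exact: int_sym M0 c0 PB (an_in n).
Qed.

End S.

Theorem mainTheorem8 (R : realType) (Q : R -> R) (A m u0 : R) (u : R -> R) (rbar : R) :
  H_EL Q A m ->
  u0 \in setA Q ->
  is_solution_P Q u0 u rbar ->
  let K := powR (A * (m + 1) ^+ 2 / 2) (1 / (m + 1)) in
  [/\ (fun x => u x / (K * powR (rbar - x) (2 / (m + 1)))) x @[x --> rbar^'-] --> (1 : R),
      (fun x => (derive1 u) x / (- (2 / (m + 1)) * K * powR (rbar - x) (2 / (m + 1) - 1)))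
         x @[x --> rbar^'-] --> (1 : R)
    & (@lebesgue_measure R).-integrable `]- rbar, rbar[ (fun x => (((derive1 u) x) ^+ 2)%:E)].
Proof.
move=> HEL Hu0 Hsol K.
split.
- exact: (main1 _ _ _ _ _ _ HEL Hu0 Hsol).
- exact: (main2 _ _ _ _ _ _ HEL Hu0 Hsol).
- exact: (main3 _ _ _ _ _ _ HEL Hu0 Hsol).
Qed.
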